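(* Let $C$ be an $A$-code of length $l>1$ with $L_{\mathrm{ind}}(C)=1$, and let $g^{(1)}=(g_{1,1},\ldots,g_{1,l})$ be the first element of the canonical basis of divisors of $C$ (so $g_{1,1}$ is a monic divisor of $f$). Let $h_{1,1}\in A$ be the image of the polynomial $f(x)/g_{1,1}(x)$. Let $C'\subseteq A^{l-1}$ be the code obtained from $C^{(2)}=\{c\in C: c_1=0\}$ by deleting the first coordinate, and let $H'=(h'_{ij})_{2\le i\le k,\,2\le j\le l}$ be any generator matrix of $C'^{\perp}$. For $2\le i\le k$ let $\alpha_i$ be the remainder, upon division by the polynomial $f/g_{1,1}$, of the polynomial $-\bigl(\sum_{j=2}^l h'_{ij}g_{1,j}\bigr)/g_{1,1}$ (entries regarded as polynomials of degree $<m$). Then the $k\times l$ matrix $$H=\begin{pmatrix} h_{1,1} & 0\ \cdots\ 0\\ \alpha_2 & \\ \vdots & H'\\ \alpha_k & \end{pmatrix}$$ is a generator matrix of $C^{\perp}$.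
   Context: Let $\mathbb{F}$ be a finite field, $f(x)\in\mathbb{F}[x]$ monic of degree $m$, and $A=\mathbb{F}[x]/\langle f(x)\rangle$, elements identified with polynomials of degree $<m$. An $A$-code of length $l$ is an $A$-submodule of $A^l$; a generator matrix of it is a matrix over $A$ whose rows generate it as an $A$-module. The dual is $C^\perp=\{a\in A^l:\sum_i a_ic_i=0\ \forall c\in C\}$. For $u\in A^l$, $L_{\mathrm{ind}}(u)$ is the smallest index of a nonzero entry ($\infty$ for $u=0$) and $L_{\mathrm{coef}}(u)$ is that entry. For nonzero $C$, $L_{\mathrm{ind}}(C)=\min_{u\in C}L_{\mathrm{ind}}(u)$; $L_{\mathrm{coef}}(C)$ is the monic polynomial $g$ of minimum degree such that some $c\in C$ has $L_{\mathrm{ind}}(c)=L_{\mathrm{ind}}(C)$, $L_{\mathrm{coef}}(c)=g$; such $c$ is a leading element. $C^{(1)}=C$, $C^{(n+1)}=\{c\in C^{(n)}:L_{\mathrm{ind}}(c)>L_{\mathrm{ind}}(C^{(n)})\}$ while $C^{(n)}\ne0$; with $k$ largest such that $C^{(k)}\neq0$, a tuple $(g^{(1)},\dots,g^{(k)})$ with $g^{(j)}$ a leading element of $C^{(j)}$ is a basis of divisors. If moreover, writing $g_{i,j_i}$ for the leading coefficient of $g^{(i)}$, one has $\deg g_{t,j_i}<\deg g_{i,j_i}$ for all $t<i$, the basis is the canonical basis of divisors (it exists and is unique for every nonzero $A$-code), and the matrix with rows $g^{(i)}$ is the canonical generator matrix (CGM). Leading coefficients of elements of a basis of divisors are monic divisors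 of $f$. *)

(* Defs.v *)
(* A = F[x]/<f> is rendered as mathcomp's quotient ring {poly %/ f}. *)
From HB Require Import structures.
From mathcomp Require Import all_boot all_order all_algebra.
Set Implicit Arguments. Unset Strict Implicit. Unset Printing Implicit Defensive.
Import GRing.Theory.
Local Open Scope ring_scope.

Section Codes.
Variable F : finFieldType.
Variable f : {poly F}.
Local Notation A := {poly %/ f}.

Section Len.
Variable l : nat.
Local Notation V := 'rV[A]_l.

Definition is_Acode (C : {set V}) : Prop :=
  [/\ 0 \in C,
      (forall c d, c \in C -> d \in C -> c + d \in C) &
      (forall (a : A) c, c \in C -> a *: c \in C)].

Definition generates n (C : {set V}) (M : 'M[A]_(n, l)) : Prop :=
  C = [set u *m M | u : 'rV[A]_n].

Definition dual (C : {set V}) : {set V} :=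
  [set a : V | [forall c in C, \sum_(j < l) a 0 j * c 0 j == 0]].

(* coordinates are 0-based: coordinate j (0 <= j < l) is the paper's j+1.
   entry u j = u_j for j < l, 0 otherwise. *)
Definition entry (u : V) (j : nat) : A := nth 0 [seq u 0 i | i <- enum 'I_l] j.

(* L_ind (0-based); value l plays the role of infinity (u = 0) *)
Definition lind (u : V) : nat := \big[minn/l]_(j : 'I_l | u 0 j != 0) (j : nat).

Definition lcoef (u : V) : A := entry u (lind u).

(* L_ind of a code (l if C = 0) *)
Definition Lind (C : {set V}) : nat := \big[minn/l]_(c in C) lind c.

Definition is_leading (C : {set V}) (c : V) : Prop :=
  [/\ c \in C, lind c = Lind C, (lcoef c : {poly F}) \is monic &
      forall d, d \in C -> lind d = Lind C -> (lcoef d : {poly F}) \is monic ->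
        (size (lcoef c : {poly F}) <= size (lcoef d : {poly F}))%N].

(* subcode C n = C^{(n+1)} *)
Fixpoint subcode (C : {set V}) (n : nat) : {set V} :=
  match n with
  | 0 => C
  | n'.+1 => [set c in subcode C n' | (Lind (subcode C n') < lind c)%N]
  end.

Definition is_basis_of_divisors (C : {set V}) (g : seq V) : Prop :=
  (forall i, (i < size g)%N ->
      subcode C i != [set 0] /\ is_leading (subcode C i) (nth 0%R g i)) /\
  subcode C (size g) \subset [set 0].

Definition is_canonical_basis (C : {set V}) (g : seq V) : Prop :=
  is_basis_of_divisors C g /\
  forall i t, (t < i)%N -> (i < size g)%N ->
    (size (entry (nth 0%R g t) (lind (nth 0%R g i)) : {poly F})
       < size (entry (nth 0%R g i) (lind (nth 0%R g i)) : {poly F}))%N.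

End Len.

Section Dual.
Variables (l' n : nat).

Definition Cprime (C : {set 'rV[A]_(1 + l')}) : {set 'rV[A]_l'} :=
  [set rsubmx c | c in subcode C 1].

Definition g11 (g1 : 'rV[A]_(1 + l')) : {poly F} := (lsubmx g1 0 0 : {poly F}).

Definition alpha (g1 : 'rV[A]_(1 + l')) (H' : 'M[A]_(n, l')) (i : 'I_n) : A :=
  in_qpoly f
    ((- (((\sum_(j < l') H' i j * rsubmx g1 0 j : A) : {poly F}) %/ g11 g1))
       %% (f %/ g11 g1)).

Definition Hmat (g1 : 'rV[A]_(1 + l')) (H' : 'M[A]_(n, l')) : 'M[A]_(1 + n, 1 + l') :=
  block_mx ((in_qpoly f (f %/ g11 g1))%:M : 'M[A]_1) (0 : 'M[A]_(1, l'))
           (\col_i alpha g1 H' i) H'.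
End Dual.
End Codes.

(* Main.v *)
Require Import Defs.
From HB Require Import structures.
From mathcomp Require Import all_boot all_order all_algebra.
Set Implicit Arguments. Unset Strict Implicit. Unset Printing Implicit Defensive.
Import GRing.Theory.
Local Open Scope ring_scope.

Section Aux.
Variable F : finFieldType.
Variable f : {poly F}.
Hypothesis Hfmonic : f \is monic.
Hypothesis Hfdeg : (1 < size f)%N.
Local Notation A := {poly %/ f}.

Lemma mkm : mk_monic f = f.
Proof. by rewrite /mk_monic Hfdeg Hfmonic. Qed.

Lemma sizeA (a : A) : (size (a : {poly F}) < size f)%N.
Proof. by rewrite -{2}mkm size_mk_monic. Qed.

Lemma qK (a : A) : in_qpoly f (a : {poly F}) = a.
Proof. by apply: val_inj; apply: in_qpoly_small; exact: size_mk_monic. Qed.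

Lemma in_qpolyE p : (in_qpoly f p : {poly F}) = p %% f.
Proof.
rewrite /= mkm modpE (monicP Hfmonic) expr1n invr1 scale1r //.
Qed.

Lemma in_qpoly_eq0 p : (in_qpoly f p == 0) = (f %| p).
Proof.
apply/eqP/idP => [/(congr1 (fun x : A => (x : {poly F})))|H].
  by rewrite in_qpolyE /= => /modp_eq0P.
apply: val_inj; have := in_qpolyE p; rewrite /= => ->; exact/modp_eq0P.
Qed.

Lemma iqB p q : in_qpoly f (p - q) = in_qpoly f p - in_qpoly f q.
Proof. exact: rmorphB. Qed.
Lemma iqN p : in_qpoly f (- p) = - in_qpoly f p.
Proof. exact: rmorphN. Qed.
Lemma iqM p q : in_qpoly f (p * q) = in_qpoly f p * in_qpoly f q.
Proof. exact: rmorphM. Qed.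

Lemma in_qpolyf : in_qpoly f f = 0.
Proof. by apply/eqP; rewrite in_qpoly_eq0 dvdpp. Qed.


Variable d : {poly F}.
Hypothesis dmon : d \is monic.
Hypothesis ddiv : d %| f.
Local Notation G := (in_qpoly f d).
Local Notation h := (in_qpoly f (f %/ d)).

Lemma d_neq0 : d != 0. Proof. exact: monic_neq0. Qed.
Lemma fd_neq0 : f %/ d != 0.
Proof.
apply/eqP => H; have := divpK ddiv; rewrite H mul0r => /esym/eqP.
by rewrite (negbTE (monic_neq0 Hfmonic)).
Qed.

Lemma hG0 : h * G = 0.
Proof. by rewrite -rmorphM /= divpK // in_qpolyf. Qed.

Lemma keyK (s : A) : h * s = 0 ->
  in_qpoly f ((- ((s : {poly F}) %/ d)) %% (f %/ d)) * G + s = 0.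
Proof.
rewrite -{1}(qK s) -rmorphM /= => /eqP; rewrite in_qpoly_eq0.
move=> Hfs.
have Hds : d %| s.
  by rewrite -(dvdp_mul2l _ _ fd_neq0) divpK.
set q := (s : {poly F}) %/ d.
have Hs : (s : {poly F}) = q * d by rewrite divpK.
have := divp_eq (- q) (f %/ d).
set k := (- q) %/ (f %/ d); set r := (- q) %% (f %/ d) => Hq.
rewrite -rmorphM /=.
have -> : r * d = - (s : {poly F}) - k * f.
  have -> : r = - q - k * (f %/ d) by rewrite Hq addrAC subrr add0r.
  by rewrite mulrBl mulNr -mulrA (divpK ddiv) -Hs.
by rewrite rmorphB /= rmorphN /= qK rmorphM /= in_qpolyf mulr0 subr0 addNr.
Qed.

Lemma keyL (b : A) : b * G = 0 -> exists v, b = v * h.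
Proof.
rewrite -{1}(qK b) -rmorphM /= => /eqP; rewrite in_qpoly_eq0.
move=> Hfb.
have : f %/ d %| b by rewrite -(dvdp_mul2r _ _ d_neq0) divpK.
move=> /dvdpP [w Hw].
exists (in_qpoly f w); by rewrite -rmorphM /= -Hw qK.
Qed.

End Aux.
Section Idx.
Variable F : finFieldType.
Variable f : {poly F}.
Local Notation A := {poly %/ f}.
Variable l' : nat.
Local Notation V := 'rV[A]_(1 + l').

Definition o0 : 'I_(1 + l') := ord0.

Lemma lind0 (u : V) : u 0 o0 != 0 -> lind u = 0%N.
Proof.
move=> H; rewrite /lind.
have : o0 \in index_enum 'I_(1 + l') by rewrite mem_index_enum.
elim: (index_enum _) => // j r IH; rewrite inE big_cons.
case: (eqVneq j o0) => [-> _|Hj /= Hr]; first by rewrite H min0n.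
by rewrite IH // if_same.
Qed.

Lemma lind_pos (u : V) : u 0 o0 = 0 -> (0 < lind u)%N.
Proof.
move=> H; rewrite /lind; apply: (big_ind (fun x => 0 < x)%N) => //.
  by move=> x y; rewrite leq_min => -> ->.
move=> j Hj; rewrite lt0n; apply/eqP => Hj0.
have : j = o0 by apply: val_inj.
by move=> E; move: Hj; rewrite E H eqxx.
Qed.

Lemma lind_eq0 (u : V) : (lind u == 0%N) = (u 0 o0 != 0).
Proof.
case: (eqVneq (u 0 o0) 0) => H.
  by apply/negbTE; rewrite -lt0n lind_pos.
by rewrite lind0.
Qed.

Lemma entry0 (u : V) : entry u 0 = u 0 o0.
Proof.
rewrite /entry (nth_map o0) ?size_enum_ord //.
by rewrite (nth_ord_enum o0 o0).
Qed.

Lemma Lind_pos (C : {set V}) : (forall c, c \in C -> c 0 o0 = 0) -> (0 < Lind C)%N.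
Proof.
move=> H; rewrite /Lind; apply: (big_ind (fun x => 0 < x)%N) => //.
  by move=> x y; rewrite leq_min => -> ->.
by move=> c /H /lind_pos.
Qed.

Lemma lsub00 (u : V) : lsubmx u 0 0 = u 0 o0.
Proof. by rewrite mxE; congr (u 0 _); apply: val_inj. Qed.

Definition dot k (a c : 'rV[A]_k) := \sum_(j < k) a 0 j * c 0 j.

Lemma dot_split (a c : V) :
  dot a c = a 0 o0 * c 0 o0 + dot (rsubmx a) (rsubmx c).
Proof.
rewrite /dot big_split_ord big_ord1 /=; congr (_ * _ + _).
- by congr (a 0 _); apply: val_inj.
- by congr (c 0 _); apply: val_inj.
by apply: eq_bigr => j _; rewrite !mxE.
Qed.

Lemma dotD k (a c e : 'rV[A]_k) : dot a (c + e) = dot a c + dot a e.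
Proof. by rewrite /dot -big_split; apply: eq_bigr => j _; rewrite mxE mulrDr. Qed.

Lemma dotZ k (a c : 'rV[A]_k) t : dot a (t *: c) = t * dot a c.
Proof. by rewrite /dot mulr_sumr; apply: eq_bigr => j _; rewrite mxE mulrCA. Qed.

Lemma dotM k p (u : 'rV[A]_p) (M : 'M[A]_(p, k)) c :
  dot (u *m M) c = \sum_(i < p) u 0 i * dot (row i M) c.
Proof.
rewrite /dot; under eq_bigr do rewrite mxE mulr_suml.
rewrite exchange_big; apply: eq_bigr => i _; rewrite mulr_sumr.
by apply: eq_bigr => j _; rewrite !mxE mulrA.
Qed.

Lemma in_dual k (C : {set 'rV[A]_k}) a :
  (a \in dual C) <-> (forall c, c \in C -> dot a c = 0).
Proof.
rewrite inE /dot; split.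
  by move=> /forall_inP H c /H /eqP.
by move=> H; apply/forall_inP => c /H ->.
Qed.

Lemma rsubmxZ (t : A) (c : V) : rsubmx (t *: c) = t *: rsubmx c.
Proof. by apply/rowP => j; rewrite !mxE. Qed.

End Idx.

Unset Implicit Arguments.
Set Strict Implicit.

Theorem mainTheorem2 (F : finFieldType) (f : {poly F})
  (Hfmonic : f \is monic) (Hfdeg : (1 < size f)%N)
  (l' : nat) (Hl : (0 < l')%N)
  (C : {set 'rV[{poly %/ f}]_(1 + l')}) (HC : is_Acode C)
  (Hind : Lind C = 0%N)
  (g : seq 'rV[{poly %/ f}]_(1 + l')) (Hg : is_canonical_basis C g)
  (n : nat) (H' : 'M[{poly %/ f}]_(n, l'))
  (HH' : generates (dual (Cprime C)) H') :
  generates (dual C) (Hmat (nth 0 g 0) H').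
Proof.
have qK' := @qK F f; have iqE := in_qpolyE Hfmonic Hfdeg.
have szA := sizeA Hfmonic Hfdeg; have iqf := in_qpolyf Hfmonic Hfdeg.
set z := o0 l'.
case: HC => HC0 HCD HCZ.
have HCN : forall c e, c \in C -> e \in C -> c - e \in C.
  by move=> c e Hc He; rewrite -scaleN1r; apply: HCD => //; apply: HCZ.
have Hsub1 : forall c, (c \in subcode C 1) = (c \in C) && (c 0 z == 0).
  by move=> c; rewrite /= inE Hind lt0n lind_eq0 negbK.
have [c1 Hc1 Hc10] : exists2 c, c \in C & c 0 z != 0.
  case: (pickP (fun c => (c \in C) && (c 0 z != 0))) => [c /andP[]|H].
    by move=> *; exists c.
  have : (0 < Lind C)%N.
    by apply: Lind_pos => c Hc; move: (H c); rewrite Hc /= => /negbFE /eqP.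
  by rewrite Hind.
have Hsg : (0 < size g)%N.
  case: Hg => [[_ Hsub] _]; rewrite lt0n; apply/eqP => E.
  move: Hsub; rewrite E /= => /subsetP /(_ c1 Hc1); rewrite inE => /eqP Ec.
  by move: Hc10; rewrite Ec mxE eqxx.
have [_ [Hg1C Hg1ind Hg1mon Hg1min]] := (Hg.1.1 0%N Hsg).
rewrite /= in Hg1C Hg1ind Hg1mon Hg1min.
set g1 := nth 0 g 0 in Hg1C Hg1ind Hg1mon Hg1min *.
have Hlc : lcoef g1 = g1 0 z by rewrite /lcoef Hg1ind Hind entry0.
set d := (g1 0 z : {poly F}).
have dmon : d \is monic by rewrite /d -Hlc.
have GE : g1 0 z = in_qpoly f d by rewrite qK'.
have Hmin : forall c, c \in C -> (size (c 0%R z : {poly F}) < size d)%N -> c 0 z = 0.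
  move=> c Hc Hs; case: (eqVneq (c 0 z) 0) => // Hn; exfalso.
  set r := (c 0 z : {poly F}) in Hs.
  have rn0 : r != 0 by apply: contra Hn => /eqP Hr; apply/eqP/val_inj.
  set k := (lead_coef r)^-1.
  have Hk : k != 0 by rewrite invr_eq0 lead_coef_eq0.
  have He : in_qpoly f (k%:P) *: c \in C by apply: HCZ.
  have E00 : ((in_qpoly f (k%:P) *: c) 0 z : {poly F}) = k%:P * r.
    rewrite mxE -[c 0 z]qK' -iqM iqE modp_small //.
    by rewrite size_Cmul // (ltn_trans Hs) // szA.
  have E00' : (in_qpoly f (k%:P) *: c) 0 z != 0.
    apply/eqP => E; move: E00; rewrite E /= => /esym /eqP.
    by rewrite mulf_eq0 polyC_eq0 (negbTE Hk) (negbTE rn0).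
  have := Hg1min _ He; rewrite lind0 // Hind => /(_ erefl).
  rewrite Hlc /lcoef lind0 // entry0 E00 monicE lead_coefM lead_coefC mulVf ?lead_coef_eq0 //.
  move=> /(_ (eqxx _)); rewrite size_Cmul // => Hle.
  by have := leq_ltn_trans Hle Hs; rewrite ltnn.
have dn0 : d != 0 := monic_neq0 dmon.
have szd : (size d < size f)%N by apply: szA.
have ddiv : d %| f.
  have Hc : (- in_qpoly f (f %/ d)) *: g1 \in C by apply: HCZ.
  have E : ((- in_qpoly f (f %/ d)) *: g1) 0 z = in_qpoly f (f %% d).
    rewrite mxE GE mulNr -iqM.
    have -> : f %/ d * d = f - f %% d by rewrite {2}(divp_eq f d) addrK.
    by rewrite iqB iqf sub0r opprK.
  have Ev : (((- in_qpoly f (f %/ d)) *: g1) 0 z : {poly F}) = f %% d.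
    by rewrite E iqE modp_small // (ltn_trans _ szd) // ltn_modp.
  have := Hmin _ Hc; rewrite Ev ltn_modp dn0 => /(_ isT) H0.
  by apply/modp_eq0P; rewrite -Ev H0.
have Hdec : forall c, c \in C -> exists t, c - t *: g1 \in subcode C 1.
  move=> c Hc; set p := (c 0 z : {poly F}).
  exists (in_qpoly f (p %/ d)).
  have He : c - in_qpoly f (p %/ d) *: g1 \in C by apply: HCN => //; apply: HCZ.
  have E : (c - in_qpoly f (p %/ d) *: g1) 0 z = in_qpoly f (p %% d).
    rewrite !mxE GE -iqM -[c 0 z]qK' -iqB; congr (in_qpoly f _).
    by rewrite [X in X - _](divp_eq p d) addrAC subrr add0r.
  rewrite Hsub1 He /=; apply/eqP; apply: Hmin => //.
  by rewrite E iqE modp_small ?ltn_modp // (ltn_trans _ szd) // ltn_modp.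
have Dchar : forall a : 'rV_(1 + l'),
    a \in dual C <-> (dot a g1 = 0 /\ rsubmx a \in dual (Cprime C)).
  move=> a; split.
    move/in_dual => H; split; first exact: H.
    apply/in_dual => c' /imsetP [c Hc ->].
    move: Hc; rewrite Hsub1 => /andP [Hc /eqP Hc0].
    by have := H c Hc; rewrite dot_split Hc0 mulr0 add0r.
  case=> H1 /in_dual H2; apply/in_dual => c Hc.
  have [t Ht] := Hdec c Hc.
  have -> : c = t *: g1 + (c - t *: g1) by rewrite addrC subrK.
  rewrite dotD dotZ H1 mulr0 add0r.
  move: (Ht); rewrite Hsub1 => /andP [Hc' /eqP H0].
  rewrite dot_split H0 mulr0 add0r; apply: H2.
  exact: imset_f.
set h := in_qpoly f (f %/ d).
have HhG : h * g1 0 z = 0 by rewrite GE hG0.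
have Hrow : forall i, row i H' \in dual (Cprime C).
  by move=> i; rewrite HH' rowE; apply/imsetP; exists (delta_mx 0 i).
set s := fun i => dot (row i H') (rsubmx g1).
have Hs_eq : forall i, \sum_(j < l') H' i j * rsubmx g1 0 j = s i.
  by move=> i; rewrite /s /dot; apply: eq_bigr => j _; rewrite !mxE.
have Hhs : forall i, h * s i = 0.
  move=> i; rewrite /s -dotZ -rsubmxZ; apply: (proj1 (in_dual _ _) (Hrow i)).
  apply: imset_f; rewrite Hsub1; apply/andP; split; first exact: HCZ.
  by rewrite mxE HhG.
have Halpha : forall i, alpha g1 H' i * g1 0 z = - s i.
  move=> i; apply/eqP; rewrite -addr_eq0.
  have := keyK Hfmonic Hfdeg ddiv (Hhs i); rewrite -GE => <-.
  by rewrite /alpha /g11 lsub00 Hs_eq.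
have Hx : forall (u : 'rV_n) (X : 'M_1) , (X *m h%:M + u *m \col_i alpha g1 H' i) 0 0
    = X 0 0 * h + \sum_i u 0 i * alpha g1 H' i.
  move=> u X; rewrite mxE mul_mx_scalar mxE; congr (_ + _); first by rewrite mulrC.
  by rewrite mxE; apply: eq_bigr => i _; rewrite mxE.
rewrite /generates; apply/setP => a; apply/idP/idP.
  move/Dchar => [H1 H2]; move: H2; rewrite HH' => /imsetP [u' _ Hu'].
  set b := a 0 z - \sum_i u' 0 i * alpha g1 H' i.
  have HbG : b * in_qpoly f d = 0.
    rewrite -GE mulrBl mulr_suml.
    rewrite (eq_bigr (fun i => - (u' 0 i * s i))); last first.
      by move=> i _; rewrite -mulrA Halpha mulrN.
    have E : dot a g1 = a 0 z * g1 0 z + \sum_i u' 0 i * s i by rewrite dot_split Hu' dotM.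
    by rewrite sumrN opprK -E.
  have [v Hv] := keyL Hfmonic Hfdeg dmon ddiv HbG.
  apply/imsetP; exists (row_mx (v%:M) u') => //.
  rewrite /Hmat mul_row_block mulmx0 add0r -Hu' -{1}(hsubmxK a); congr row_mx.
  apply/rowP => j; rewrite ord1 /g11 lsub00 Hx lsub00 mxE eqxx mulr1n -Hv /b subrK.
  by [].
move/imsetP => [u _ ->]; rewrite -(hsubmxK u) /Hmat mul_row_block mulmx0 add0r.
apply/Dchar; rewrite row_mxKr; split; last first.
  by rewrite HH'; apply/imsetP; exists (rsubmx u).
rewrite dot_split -lsub00 row_mxKl row_mxKr /g11 lsub00 Hx dotM mulrDl mulr_suml -mulrA.
rewrite -/h HhG mulr0 add0r -big_split /=; apply: big1 => i _.
by rewrite -mulrA Halpha -mulrDr /s addNr mulr0.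
Qed.
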